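(* Let $\lambda,\mu\in\mathbb{C}^*$, $\alpha,\beta\in\mathbb{C}$ and $t,t'\in\{1,-1\}$, and let $\mathcal{M}_t(\lambda,\alpha)$ denote the $\mathcal{T}$-modules described in the context. Then: (i) $\Pi(\mathcal{M}_t(\lambda,\alpha))\not\cong\mathcal{M}_{t'}(\mu',\beta')$ for any $\mu'\in\mathbb{C}^*$, $\beta'\in\mathbb{C}$; (ii) $\mathcal{M}_t(\lambda,\alpha)\cong\mathcal{M}_{t'}(\mu,\beta)$ if and only if $\lambda=\mu$, $\alpha=\beta$ and $t=t'$.
   Context: The twisted $N=2$ superconformal algebra $\mathcal{T}$ is the Lie superalgebra over $\mathbb{C}$ with basis $\{L_m, I_r, G_p\mid m\in\mathbb{Z}, r\in\frac12+\mathbb{Z}, p\in\frac12\mathbb{Z}\}$, even part spanned by the $L_m,I_r$, odd part spanned by the $G_p$, and with the only nonzero brackets $[L_m,L_n]=(m-n)L_{m+n}$, $[L_m,I_r]=-rI_{m+r}$, $[L_m,G_p]=(\frac m2-p)G_{m+p}$, $[I_r,G_p]=G_{r+p}$, and $[G_p,G_q]=(-1)^{2p}2L_{p+q}$ if $p+q\in\mathbb{Z}$, $[G_p,G_q]=(-1)^{2p+1}(p-q)I_{p+q}$ if $p+q\in\frac12+\mathbb{Z}$. Modules are $\mathbb{Z}_2$-graded (super)modules and isomorphisms preserve parity; $\Pi$ is the parity-change functor. For $\lambda\in\mathbb{C}^*,\alpha\in\mathbb{C},t=\pm1$, $\mathcal{M}_t(\lambda,\alpha)$ is the space $\mathbb{C}[\partial^2]\oplus\partial\mathbb{C}[\partial^2]$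 ($\partial$ a formal variable) with even part $\mathbb{C}[\partial^2]$, odd part $\partial\mathbb{C}[\partial^2]$, and action ($m\in\mathbb{Z}$, $r\in\frac12+\mathbb{Z}$, $p\in\frac12\mathbb{Z}$): $L_mf(\partial^2)=\lambda^m(\partial^2+m\alpha)f(\partial^2+m)$, $L_m\partial f(\partial^2)=\lambda^m(\partial^2+m(\alpha+\frac12))\partial f(\partial^2+m)$, $I_rf(\partial^2)=-2t^{2r}\lambda^{r}\alpha f(\partial^2+r)$, $I_r\partial f(\partial^2)=t^{2r}\lambda^{r}(1-2\alpha)\partial f(\partial^2+r)$, $G_pf(\partial^2)=t^{2p}\lambda^p\partial f(\partial^2+p)$, $G_p\partial f(\partial^2)=(-t)^{2p}\lambda^p(\partial^2+2p\alpha)f(\partial^2+p)$. For $p\in\frac12\mathbb{Z}$, $\lambda^p$ means $(\lambda^{1/2})^{2p}$ for a fixed square root $\lambda^{1/2}$ (likewise for $\mu$). *)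

(* Defs.v *)
From HB Require Import structures.
From mathcomp Require Import all_boot all_order all_algebra.
From mathcomp Require Import complex.
From mathcomp Require Import reals.
Set Implicit Arguments. Unset Strict Implicit. Unset Printing Implicit Defensive.
Import Order.TTheory GRing.Theory Num.Theory.
Local Open Scope ring_scope.

(* Basis of the twisted N=2 superconformal algebra T:
   TL m   = L_m            (m : int)
   TI k   = I_r  with r = k + 1/2   (k : int)
   TG n   = G_p  with p = n / 2     (n : int)                          *)
Inductive Tbasis := TL of int | TI of int | TG of int.

(* Underlying space C[d^2] (+) d C[d^2]: a pair (f, g) stands for
   f(d^2) + d g(d^2); f is the even component, g the odd one. *)
Definition Mspace (C : fieldType) : Type := ({poly C} * {poly C})%type.

Definition shiftp (C : fieldType) (c : C) (f : {poly C}) : {poly C} :=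
  f \Po ('X + c%:P).

(* Action of the basis of T on M_t(lambda, alpha).  [s] is the fixed square
   root lambda^{1/2}, so lambda^p = s^(2p).  *)
Definition Mact (C : fieldType) (s t alpha : C) (x : Tbasis) (v : Mspace C)
  : Mspace C :=
  let f := v.1 in let g := v.2 in
  match x with
  | TL m =>
      let c := (m%:~R : C) in
      (s ^ (2 * m) *: (('X + (c * alpha)%:P) * shiftp c f),
       s ^ (2 * m) *: (('X + (c * (alpha + 2^-1))%:P) * shiftp c g))
  | TI k =>
      let r := (k%:~R + 2^-1 : C) in
      ((- 2 * t ^ (2 * k + 1) * s ^ (2 * k + 1) * alpha) *: shiftp r f,
       (t ^ (2 * k + 1) * s ^ (2 * k + 1) * (1 - 2 * alpha)) *: shiftp r g)
  | TG n =>
      let p := (n%:~R / 2 : C) in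
      (((- t) ^ n * s ^ n) *: (('X + (n%:~R * alpha)%:P) * shiftp p g),
       (t ^ n * s ^ n) *: shiftp p f)
  end.

(* A supermodule on the space Mspace C, given by an action of the basis of T
   and a parity flag: [false] means even part = C[d^2] (first component),
   [true] means parity changed (Pi), i.e. even part = d C[d^2]. *)
Definition is_even (C : fieldType) (pi : bool) (v : Mspace C) : Prop :=
  if pi then v.1 = 0 else v.2 = 0.
Definition is_odd (C : fieldType) (pi : bool) (v : Mspace C) : Prop :=
  if pi then v.2 = 0 else v.1 = 0.

Definition Mlinear (C : fieldType) (phi : Mspace C -> Mspace C) : Prop :=
  forall (a : C) (u v : Mspace C),
    phi ((a *: u.1 + v.1, a *: u.2 + v.2))
    = (a *: (phi u).1 + (phi v).1, a *: (phi u).2 + (phi v).2).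

Definition smod_iso (C : fieldType)
  (act1 : Tbasis -> Mspace C -> Mspace C) (pi1 : bool)
  (act2 : Tbasis -> Mspace C -> Mspace C) (pi2 : bool) : Prop :=
  exists phi : Mspace C -> Mspace C,
    [/\ Mlinear phi, bijective phi,
        (forall x v, phi (act1 x v) = act2 x (phi v)),
        (forall v, is_even pi1 v -> is_even pi2 (phi v)) &
        (forall v, is_odd pi1 v -> is_odd pi2 (phi v))].

(* Main.v *)
Require Import Defs.
From HB Require Import structures.
From mathcomp Require Import all_boot all_order all_algebra.
From mathcomp Require Import complex.
From mathcomp Require Import reals.
From mathcomp Require Import ring.
Import Order.TTheory GRing.Theory Num.Theory.
Local Open Scope ring_scope.

Lemma shift0 (C : fieldType) (f : {poly C}) : shiftp 0 f = f.
Proof. by rewrite /shiftp addr0 comp_polyXr. Qed.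

Lemma shiftC (C : fieldType) (c k : C) : shiftp c k%:P = k%:P.
Proof. by rewrite /shiftp comp_polyC. Qed.

Lemma actL0 (C : fieldType) (s t a : C) f g :
  Mact s t a (TL 0) (f, g) = ('X * f, 'X * g).
Proof. by rewrite /Mact /= !mul0r !addr0 !shift0 !scale1r. Qed.

Lemma lin0 (C : fieldType) (phi : Mspace C -> Mspace C) :
  Mlinear phi -> phi (0, 0) = (0, 0).
Proof.
move=> lin; have := lin 1 (0,0) (0,0); rewrite /= scaler0 addr0 !scale1r.
case: (phi (0,0)) => x y [] Hx Hy.
have ->: x = 0 by apply: (@addrI _ x); rewrite addr0 -Hx.
have ->: y = 0 by apply: (@addrI _ y); rewrite addr0 -Hy.
by [].
Qed.

Lemma Xlin (C : fieldType) (phi : Mspace C -> Mspace C) s1 t1 a1 s2 t2 a2 :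
  Mlinear phi ->
  (forall v, phi (Mact s1 t1 a1 (TL 0) v) = Mact s2 t2 a2 (TL 0) (phi v)) ->
  forall p f g, phi (p * f, p * g) = (p * (phi (f, g)).1, p * (phi (f, g)).2).
Proof.
move=> lin comm p f g; elim/poly_ind: p => [|p c IH].
  by rewrite !mul0r lin0.
have E h : (p * 'X + c%:P) * h = c *: h + 'X * (p * h).
  by rewrite -mul_polyC mulrDl addrC mulrA (mulrC p 'X).
rewrite !E; have /= -> := lin c (f,g) ('X*(p*f), 'X*(p*g)).
have -> : ('X * (p * f), 'X * (p * g)) = Mact s1 t1 a1 (TL 0) (p * f, p * g).
  by rewrite actL0.
rewrite comm IH.
case: (phi (f, g)) => x y /=.
by rewrite !mul0r !addr0 !shift0 !scale1r.
Qed.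

Lemma unit_const (C : fieldType) (f a : {poly C}) :
  f * a = 1 -> a = (a`_0)%:P /\ a`_0 != 0.
Proof.
move=> H; have : a \is a GRing.unit by apply/unitrPr; exists f; rewrite mulrC.
rewrite poly_unitE => /andP [sz _]; have [c c0 ->] := size_poly1P _ sz.
by rewrite coefC eqxx.
Qed.

Lemma actL1 (C : fieldType) (s t a : C) f g :
  Mact s t a (TL 1) (f, g) =
  (s ^+ 2 *: (('X + a%:P) * shiftp 1 f), s ^+ 2 *: (('X + (a + 2^-1)%:P) * shiftp 1 g)).
Proof.
rewrite /Mact /=; have -> : (2 * 1 : int) = 2 by [].
by rewrite mulr1z !mul1r.
Qed.

Lemma actI0 (C : fieldType) (s t a : C) f g :
  Mact s t a (TI 0) (f, g) =
  ((- 2 * t * s * a) *: shiftp 2^-1 f, (t * s * (1 - 2 * a)) *: shiftp 2^-1 g).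
Proof.
rewrite /Mact /=; have -> : (2 * 0 + 1 : int) = 1 by [].
by rewrite mulr0z add0r !expr1z.
Qed.

Lemma decomp (C : fieldType) (phi : Mspace C -> Mspace C) :
  Mlinear phi ->
  (forall p f g, phi (p * f, p * g) = (p * (phi (f, g)).1, p * (phi (f, g)).2)) ->
  forall f g, phi (f, g) = (f * (phi (1, 0)).1 + g * (phi (0, 1)).1,
                           f * (phi (1, 0)).2 + g * (phi (0, 1)).2).
Proof.
move=> lin XL f g.
have := lin 1 (f * 1, f * 0) (g * 0, g * 1); rewrite /= (XL f 1 0) (XL g 0 1) /=.
by rewrite !mulr1 !mulr0 !scale1r addr0 add0r => ->.
Qed.

Lemma eqlin (C : fieldType) (k1 u1 c1 k2 u2 c2 : C) :
  (k1 *: ('X + u1%:P)) * c1%:P = (k2 *: ('X + u2%:P)) * c2%:P ->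
  k1 * c1 = k2 * c2 /\ k1 * u1 * c1 = k2 * u2 * c2.
Proof.
move=> E; split; [have := congr1 (fun p : {poly C} => p`_1) E | have := congr1 (fun p : {poly C} => p`_0) E];
  rewrite !coefMC !coefZ !coefD !coefX !coefC /=;
  by rewrite ?addr0 ?add0r ?mulr1 ?mul1r.

Qed.

Lemma shift1 (C : fieldType) (c : C) : shiftp c 1 = 1.
Proof. by rewrite -polyC1 shiftC. Qed.

Lemma shift0p (C : fieldType) (c : C) : shiftp c 0 = 0.
Proof. by rewrite /shiftp comp_poly0. Qed.

Lemma iso_setup (C : fieldType) s t a s' t' b
  (phi : Mspace C -> Mspace C) :
  Mlinear phi -> bijective phi ->
  (forall x v, phi (Mact s t a x v) = Mact s' t' b x (phi v)) ->
  exists psi, cancel psi phi /\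
  forall f g, phi (f, g) = (f * (phi (1, 0)).1 + g * (phi (0, 1)).1,
                           f * (phi (1, 0)).2 + g * (phi (0, 1)).2).
Proof.
move=> lin [psi _ K] comm; exists psi; split => //.
apply: decomp => //; apply: Xlin lin _ => v; exact: comm.
Qed.

Lemma case_ii (C : fieldType) (s t a s' t' b : C) : s != 0 ->
  smod_iso (Mact s t a) false (Mact s' t' b) false ->
  s ^+ 2 = s' ^+ 2 /\ a = b /\ (s = s' -> t = t').
Proof.
move=> s0 [phi [lin bij comm ev od]].
have [psi [K D]] := @iso_setup _ _ _ _ _ _ _ phi lin bij comm.
have e1 : (phi (1,0)).2 = 0 by exact: (ev (1,0)).
have o1 : (phi (0,1)).1 = 0 by exact: (od (0,1)).
move: D; rewrite e1 o1; set A := (phi (1,0)).1; set B := (phi (0,1)).2 => D.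
have {}D : forall f g, phi (f,g) = (f*A, g*B).
  by move=> f g; rewrite D !mulr0 addr0 add0r.
have [cA [eA A0]] : exists c, A = c%:P /\ c != 0.
  case E: (psi (1,0)) => [f g]; have := K (1,0); rewrite E D => -[/unit_const [EA nz] _].
  by exists A`_0.
have [cB [eB B0]] : exists c, B = c%:P /\ c != 0.
  case E: (psi (0,1)) => [f g]; have := K (0,1); rewrite E D => -[_ /unit_const [EA nz]].
  by exists B`_0.
have := comm (TL 1) (1,0).
rewrite actL1 !D actL1 => -[E1 _].
rewrite shift1 mulr1 mul1r eA shiftC scalerAl in E1.
have [h1 h2] := eqlin _ _ _ _ _ _ _ E1.
have L : s ^+ 2 = s' ^+ 2 by exact: (mulIf A0 h1).
have s20 : s ^+ 2 != 0 by rewrite expf_neq0.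
have ab : a = b.
  by apply: (mulfI s20); apply: (mulIf A0); rewrite h2 L.
split => //; split => // ss; subst s' b.
have := comm (TI 0) (1,0); rewrite actI0 !D actI0 => -[E2 _].
have := comm (TI 0) (0,1); rewrite actI0 !D actI0 => -[_ E3].
rewrite shift1 mul1r eA shiftC -!mul_polyC mulr1 -!polyCM in E2.
rewrite shift1 mul1r eB shiftC -!mul_polyC mulr1 -!polyCM in E3.
move/polyC_inj/(mulIf A0): E2 => E2.
move/polyC_inj/(mulIf B0): E3 => E3.
case: (eqVneq (1 - 2 * a) 0) => [h|h].
  have h' : 2 * a = 1 by move/eqP: h; rewrite subr_eq0 eq_sym => /eqP.
  apply: (@mulIf _ (s * (2 * a))); first by rewrite h' mulr1.
  transitivity (- (-2 * t * s * a)); first ring.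
  by rewrite E2; ring.
apply: (@mulIf _ (s * (1 - 2 * a))); first by rewrite mulf_neq0.
by rewrite !mulrA.
Qed.

Lemma case_i (C : fieldType) (s t a s' t' b : C) : s != 0 -> (2 : C) != 0 ->
  ~ smod_iso (Mact s t a) true (Mact s' t' b) false.
Proof.
move=> s0 two0 [phi [lin bij comm ev od]].
have [psi [K D]] := @iso_setup _ _ _ _ _ _ _ phi lin bij comm.
have e1 : (phi (0,1)).2 = 0 by exact: (ev (0,1)).
have o1 : (phi (1,0)).1 = 0 by exact: (od (1,0)).
move: D; rewrite e1 o1; set A := (phi (0,1)).1; set B := (phi (1,0)).2 => D.
have {}D : forall f g, phi (f,g) = (g*A, f*B).
  by move=> f g; rewrite D !mulr0 addr0 add0r.
have [cA [eA A0]] : exists c, A = c%:P /\ c != 0.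
  case E: (psi (1,0)) => [f g]; have := K (1,0); rewrite E D => -[/unit_const [EA nz] _].
  by exists A`_0.
have [cB [eB B0]] : exists c, B = c%:P /\ c != 0.
  case E: (psi (0,1)) => [f g]; have := K (0,1); rewrite E D => -[_ /unit_const [EA nz]].
  by exists B`_0.
have := comm (TL 1) (0,1); rewrite actL1 !D actL1 => -[E1 _].
have := comm (TL 1) (1,0); rewrite actL1 !D actL1 => -[_ E2].
rewrite shift1 mulr1 mul1r eA shiftC scalerAl in E1.
rewrite shift1 mulr1 mul1r eB shiftC scalerAl in E2.
have [h1 h2] := eqlin _ _ _ _ _ _ _ E1.
have [h3 h4] := eqlin _ _ _ _ _ _ _ E2.
have L : s ^+ 2 = s' ^+ 2 by exact: (mulIf A0 h1).
have s20 : s ^+ 2 != 0 by rewrite expf_neq0.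
have ab : a + 2^-1 = b.
  by apply: (mulfI s20); apply: (mulIf A0); rewrite h2 L.
have ba : a = b + 2^-1.
  by apply: (mulfI s20); apply: (mulIf B0); rewrite h4 L.
have : (1 : C) = 0.
  have -> : (1 : C) = 2^-1 + 2^-1.
    have E : (2^-1 * 2 : C) = 1 by rewrite mulVf.
    by rewrite -{1}E mulr_natr mulr2n.
  by apply: (@addrI _ a); rewrite addr0 addrA ab -ba.
by move/eqP; rewrite oner_eq0.
Qed.

Theorem theorem2p7 (R : realType) (sq : R[i] -> R[i])
  (hsq : forall z : R[i], z != 0 -> sq z ^+ 2 = z)
  (lambda mu alpha beta t t' : R[i])
  (hl : lambda != 0) (hm : mu != 0)
  (ht : t = 1 \/ t = -1) (ht' : t' = 1 \/ t' = -1) :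
  (forall (mu' beta' : R[i]), mu' != 0 ->
     ~ smod_iso (Mact (sq lambda) t alpha) true
                (Mact (sq mu') t' beta') false)
  /\
  (smod_iso (Mact (sq lambda) t alpha) false (Mact (sq mu) t' beta) false
   <-> [/\ lambda = mu, alpha = beta & t = t']).
Proof.
have s0 : sq lambda != 0.
  by apply/eqP => h; move: (hsq _ hl); rewrite h expr0n /= => /esym/eqP; rewrite (negPf hl).
have two0 : (2 : R[i]) != 0 by rewrite pnatr_eq0.
split.
  by move=> mu' beta' _; apply: case_i.
split.
  move=> iso; have [L [ab tt]] := case_ii _ _ _ _ _ _ _ s0 iso.
  have lm : lambda = mu by rewrite -(hsq _ hl) -(hsq _ hm).
  by split => //; apply: tt; rewrite lm.
case=> <- <- <-; exists id; split => //.
by exists id.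
Qed.
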